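(* Let $G$ be a graph with girth at least $7$. If $G$ contains a path $s_1u_1vu_2s_2$ such that $s_1$ and $s_2$ are support vertices and, for each $i\in\{1,2\}$, $u_i$ is the only neighbor of $s_i$ having degree at least $2$, then $G\notin\mathcal U$.
   Context: All graphs are finite and simple. A set $P\subseteq V(G)$ is an open packing if no two distinct vertices of $P$ have a common neighbor; it is maximal if maximal under inclusion among open packings. $\rho^o(G)$ is the maximum size of an open packing and $\rho^o_L(G)$ the minimum size of a maximal open packing; $\mathcal U$ is the class of graphs with $\rho^o_L(G)=\rho^o(G)$. A leaf is a vertex of degree $1$; a support vertex is a vertex adjacent to at least one leaf. The girth is the length of a shortest cycle ($\infty$ if acyclic). *)

(* Defs.v *)
From mathcomp Require Import all_boot all_order.
Set Implicit Arguments. Unset Strict Implicit. Unset Printing Implicit Defensive.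

Definition simple_graph (T : finType) (e : rel T) : Prop :=
  symmetric e /\ irreflexive e.

Definition nbhd (T : finType) (e : rel T) (x : T) : {set T} := [set y | e x y].
Definition deg (T : finType) (e : rel T) (x : T) : nat := #|nbhd e x|.

Definition is_leaf (T : finType) (e : rel T) (x : T) : bool := deg e x == 1.
Definition is_support (T : finType) (e : rel T) (x : T) : bool :=
  [exists y, e x y && is_leaf e y].

Definition open_packing (T : finType) (e : rel T) (P : {set T}) : Prop :=
  forall x y z, x \in P -> y \in P -> x != y -> ~ (e x z && e y z).

Definition maximal_open_packing (T : finType) (e : rel T) (P : {set T}) : Prop :=
  open_packing e P /\
  forall Q : {set T}, open_packing e Q -> P \subset Q -> Q = P.

Definition is_rho_o (T : finType) (e : rel T) (k : nat) : Prop :=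
  (exists P, open_packing e P /\ #|P| = k) /\
  (forall P, open_packing e P -> #|P| <= k).

Definition is_rho_oL (T : finType) (e : rel T) (k : nat) : Prop :=
  (exists P, maximal_open_packing e P /\ #|P| = k) /\
  (forall P, maximal_open_packing e P -> k <= #|P|).

Definition in_U (T : finType) (e : rel T) : Prop :=
  exists k, is_rho_o e k /\ is_rho_oL e k.

Definition is_cycle (T : finType) (e : rel T) (c : seq T) : Prop :=
  3 <= size c /\ uniq c /\
  match c with
  | [::] => False
  | x :: _ => path e x (behead c) /\ e (last x c) x
  end.

Definition girth_at_least (T : finType) (e : rel T) (g : nat) : Prop :=
  forall c, is_cycle e c -> g <= size c.

(* Main.v *)
Require Import Defs.
From mathcomp Require Import all_boot all_order.
From Stdlib Require Import Classical.
Set Implicit Arguments. Unset Strict Implicit. Unset Printing Implicit Defensive.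

Lemma exists_maximal (T : finType) (e : rel T) n : forall P : {set T},
  #|~: P| <= n -> open_packing e P ->
  exists M, maximal_open_packing e M /\ P \subset M.
Proof.
elim: n => [|n IH] P Hc Hp.
  exists P; split; last exact: subxx.
  split => // Q HQ HPQ.
  have HP0 : ~: P = set0 by apply/eqP; rewrite -cards_eq0 -leqn0.
  have EP : P = [set: T] by rewrite -(setCK P) HP0 setC0.
  by move: HPQ; rewrite EP => HPQ; apply/eqP; rewrite eqEsubset subsetT HPQ.
case: (classic (maximal_open_packing e P)) => Hm.
  by exists P; split => //; exact: subxx.
have [Q [HQ [HPQ HQP]]] : exists Q, open_packing e Q /\ P \subset Q /\ Q <> P.
  apply: NNPP => Hn; apply: Hm; split => // Q HQ HPQ.
  apply: NNPP => HQP; apply: Hn; by exists Q.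
have Hpr : P \proper Q by rewrite properEneq HPQ andbT; apply/eqP => E; apply: HQP.
have : #|~: Q| <= n.
  rewrite -ltnS; apply: leq_trans Hc; apply: proper_card; by rewrite properC.
move=> /IH /(_ HQ) [M [HM HQM]]; exists M; split => //.
exact: subset_trans HPQ HQM.
Qed.

Section L.
Variables (T : finType) (e : rel T).

Lemma deg1_uniq w a b : deg e w < 2 -> e w a -> e w b -> a = b.
Proof.
move=> Hd Ha Hb; apply/eqP; apply: contraLR Hd => Hab.
have <- : #|[set a; b]| = 2 by rewrite cards2 Hab.
rewrite -leqNgt /deg.
by apply: subset_leq_card; apply/subsetP => x; rewrite !inE => /orP [] /eqP ->.
Qed.
End L.

Theorem lemma4 (T : finType) (e : rel T) (s1 u1 v u2 s2 : T) :
  simple_graph e ->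
  girth_at_least e 7 ->
  uniq [:: s1; u1; v; u2; s2] ->
  e s1 u1 -> e u1 v -> e v u2 -> e u2 s2 ->
  is_support e s1 -> is_support e s2 ->
  (forall w, e s1 w -> (2 <= deg e w) = (w == u1)) ->
  (forall w, e s2 w -> (2 <= deg e w) = (w == u2)) ->
  ~ in_U e.
Proof.
move=> [Hsym Hirr] Hg Hu E1 E2 E3 E4 /existsP [l1 /andP [El1 Hl1]] _ D1 D2 [k [[_ Hmax] [_ Hmin]]].
have Hs : forall a b, e a b -> e b a by move=> a b; rewrite Hsym.
have Hne : forall a b, e a b -> a != b.
  by move=> a b Hab; apply/eqP => E; move: Hab; rewrite E Hirr.
move: Hu; rewrite /= !inE !negb_or => /andP [/and4P [n12 n13 n14 n15] /andP [/and3P [n23 n24 n25] /andP [/andP [n34 n35] /andP [n45 _]]]].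
have Ht : forall z, e u1 z -> e v z -> False.
  move=> z Hz1 Hz2; have := Hg [:: u1; v; z]; rewrite /is_cycle /= => H.
  have : 7 <= 3; last by [].
  apply: H; split => //; split.
    by rewrite !inE negb_or n23 /= (Hne _ _ Hz1) (Hne _ _ Hz2).
  by rewrite E2 Hz2 Hs.
have H12 : ~~ e s1 s2.
  apply/negP => H; have := Hg [:: s1; u1; v; u2; s2]; rewrite /is_cycle /= => H'.
  have : 7 <= 5; last by [].
  apply: H'; split => //; split.
    by rewrite !inE !negb_or n12 n13 n14 n15 n23 n24 n25 n34 n35 n45.
  by rewrite E1 E2 E3 E4 Hs.
have Hu1s2 : ~~ e u1 s2.
  apply/negP => H; have := Hg [:: u1; v; u2; s2]; rewrite /is_cycle /= => H'.
  have : 7 <= 4; last by [].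
  apply: H'; split => //; split.
    by rewrite !inE !negb_or n23 n24 n25 n34 n35 n45.
  by rewrite E2 E3 E4 Hs.
have L1 : forall w x y, e s1 w -> w != u1 -> e w x -> e w y -> x = y.
  move=> w x y Hw Hwu; apply: deg1_uniq; by rewrite ltnNge D1 // (negPf Hwu).
have L2 : forall w x y, e s2 w -> w != u2 -> e w x -> e w y -> x = y.
  move=> w x y Hw Hwu; apply: deg1_uniq; by rewrite ltnNge D2 // (negPf Hwu).
have Hl1u : l1 != u1 by apply/eqP => E; have := D1 _ El1; rewrite (eqP Hl1) E eqxx.
have Hl1nb : forall z, e l1 z -> z = s1.
  move=> z Hz; exact: (L1 l1 z s1 El1 Hl1u Hz (Hs _ _ El1)).
have Hop0 : open_packing e [set u1; v].
  move=> x y z; rewrite !inE => /orP [] /eqP -> /orP [] /eqP -> /=; rewrite ?eqxx // => _ /andP [a b];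
   [exact: (Ht z a b) | exact: (Ht z b a)].
have [P [[HP HPm] HsP]] := exists_maximal (leqnn _) Hop0.
have u1P : u1 \in P by apply: (subsetP HsP); rewrite !inE eqxx.
have vP : v \in P by apply: (subsetP HsP); rewrite !inE eqxx orbT.
have s1P : s1 \notin P.
  by apply/negP => H; apply: (HP s1 v u1 H vP n13); rewrite E1 (Hs _ _ E2).
have s2P : s2 \notin P.
  by apply/negP => H; apply: (HP s2 v u2 H vP); [rewrite eq_sym | rewrite (Hs _ _ E4) E3].
have l1P : l1 \notin P.
  apply/negP => H; apply: (HP l1 u1 s1 H u1P Hl1u); by rewrite (Hs _ _ El1) (Hs _ _ E1).
have l1s1 : l1 != s1 by rewrite eq_sym Hne.
have l1s2 : l1 != s2 by apply/eqP => E; move: H12; rewrite -E El1.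
have Hs12 : s1 != s2 by [].
pose Q := l1 |: (s1 |: (s2 |: (P :\ u1 :\ v))).
have HQ : open_packing e Q.
  pose good a b := forall z, e a z -> e b z -> False.
  have gsym : forall a b, good a b -> good b a by move=> a b H z x y; exact: H z y x.
  have gP : forall x, x \in P -> x != u1 -> x != v ->
      good x l1 /\ good x s1 /\ good x s2.
    move=> x xP xu xv; split; [|split].
    - move=> z Hx Hz; rewrite (Hl1nb z Hz) in Hx.
      by apply: (HP x u1 s1) => //; rewrite Hx Hs.
    - move=> z Hx Hz; case: (eqVneq z u1) => [Ez|Hzu].
        rewrite Ez in Hx; by apply: (HP x v u1) => //; rewrite Hx Hs.
      have := L1 z x s1 Hz Hzu (Hs _ _ Hx) (Hs _ _ Hz) => Ex.
      by move: s1P; rewrite -Ex xP.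
    - move=> z Hx Hz; case: (eqVneq z u2) => [Ez|Hzu].
        rewrite Ez in Hx; by apply: (HP x v u2) => //; rewrite Hx E3.
      have := L2 z x s2 Hz Hzu (Hs _ _ Hx) (Hs _ _ Hz) => Ex.
      by move: s2P; rewrite -Ex xP.
  have g_l1s1 : good l1 s1 by move=> z Hz; rewrite (Hl1nb z Hz) Hirr.
  have g_l1s2 : good l1 s2 by move=> z Hz; rewrite (Hl1nb z Hz) => H; move: H12; rewrite Hs.
  have g_s1s2 : good s1 s2.
    move=> z Hz1 Hz2; case: (eqVneq z u1) => [Ez|Hzu].
      by move: Hu1s2; rewrite -Ez Hs.
    have := L1 z s1 s2 Hz1 Hzu (Hs _ _ Hz1) (Hs _ _ Hz2) => Ex.
    by move: Hs12; rewrite Ex eqxx.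
  have gPP : forall x y, x \in P -> y \in P -> x != y -> good x y.
    move=> x y xP yP xy z a b; apply: (HP x y z) => //; by rewrite a b.
  move=> x y z; rewrite !inE => Hx Hy Hxy /andP [a b]; move: Hxy z a b.
  case/or3P: Hx => [/eqP ->|/eqP ->|/orP [/eqP ->| /andP [xv /andP [xu xP]]]];
  case/or3P: Hy => [/eqP ->|/eqP ->|/orP [/eqP ->| /andP [yv /andP [yu yP]]]];
  move=> Hxy;
  try (by rewrite eqxx in Hxy);
  try (by apply: gsym; apply gP);
  try (by apply gP);
  try (by apply: gsym);
  try done.
  exact: gPP.
have cQ : #|Q| = #|P| + 1.
  rewrite /Q !cardsU1 !inE !negb_or !negb_and !negbK l1s1 l1s2 Hs12 (negPf l1P) (negPf s1P) (negPf s2P) /= ?orbT.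
  rewrite (cardsD1 u1 P) (cardsD1 v (P :\ u1)) u1P !inE vP eq_sym n23 /=.
  by rewrite [RHS]addnC.
have := Hmax Q HQ; have := Hmin P (conj HP HPm).
rewrite cQ addn1 => H1 H2.
by have := leq_trans H2 H1; rewrite ltnn.
Qed.
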